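(* Let $t\ge1$ and $n=2(t+1)^2$. Let $\mathcal{C}_0\subseteq\mathbb{Z}_n^2$ be a linear $t$-error-correcting diameter perfect code with generator matrix $G_0$, and let $\mathcal{C}=\mathbf{x}+\mathcal{C}_0$ for some $\mathbf{x}=(x_1,x_2)\in\mathbb{Z}_n^2$. Suppose $\mathcal{C}$ is of Case I or Case II, and let $\mathcal{S}$ be the set of diameter perfect Sudoku grids with respect to $\mathcal{C}$ and its anticodes. (i) If $\mathcal{C}$ is of Case I, let $\mathcal{G}_\mathcal{S}=\langle \tau_1^{t+1}\tau_2^{t+1},\ \tau_2^{2(t+1)},\ \tau_2^{2x_2+1}s,\ \tau_1^{2x_1+2}\tau_2^{2x_2+1}r^2\rangle$. (ii) If $\mathcal{C}$ is of Case II and $G_0=[a~~b]$, let $\mathcal{G}_\mathcal{S}=\langle \tau_1^{a}\tau_2^{b},\ \tau_1^{2x_1+2}\tau_2^{2x_2+1}r^2\rangle$. Then in either case, for every $S\in\mathcal{S}$ and every $g\in\mathcal{G}_\mathcal{S}$, $g\cdot S\in\mathcal{S}$.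
   Context: $\mathbb{Z}_n$ is the integers modulo $n$; Lee weight $\mathrm{wt}_L(\mathbf{u})=\sum_i\min\{u_i,n-u_i\}$, Lee distance $d_L(\mathbf{u},\mathbf{v})=\mathrm{wt}_L(\mathbf{u}-\mathbf{v})$. A linear code is a submodule of $\mathbb{Z}_n^2$; its generator matrix has rows forming a minimal spanning set. Codes $\mathcal{C}_1,\mathcal{C}_2$ are equivalent if $\mathcal{C}_1P=\mathcal{C}_2$ for a permutation matrix $P$. For an adjacent pair $\{p_1,p_2\}$ (Lee distance 1), $\mathcal{A}_{2t+1}$ is the set of points at Lee distance at most $t$ from $p_1$ or $p_2$; $\{p_1,p_2\}$ is its core; in $\mathbb{Z}_n^2$ it has $2(t+1)^2=n$ points and is a maximum-size anticode of diameter $2t+1$. A $t$-error-correcting diameter perfect code here means a $(2t+1)$-diameter perfect code $\mathcal{C}\subseteq\mathbb{Z}_n^2$ with minimum distance $2t+2$ and anticode $\mathcal{A}_{2t+1}$, i.e. $|\mathcal{C}|\cdot|\mathcal{A}_{2t+1}|=n^2$, so $|\mathcal{C}|=n$. Case I: $\mathcal{C}_0$ is equivalent to the code $\mathcal{C}'$ generated by $\begin{bmatrix}t+1&t+1\\0&2(t+1)\end{bmatrix}$; Case II: $\mathcal{C}_0$ is equivalent to the code $\mathcal{C}''$ generated by $[1~~2t+1]$. Convention: for each codeword $\mathbf{c}$, the associated translate of $\mathcal{A}_{2t+1}$ has core $\{\mathbf{c},\mathbf{c}+(1,0)\}$; these $n$ translates partition $\mathbb{Z}_n^2$. Writing $\mathcal{C}=\{\mathbf{c}_1,\dots,\mathbf{c}_n\}$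 and $\mathcal{A}_i$ for the translate associated to $\mathbf{c}_i$, the palette grid $\mathcal{I}_{\mathcal{C},\mathcal{A}}$ is the $n\times n$ array (rows/columns indexed by $\mathbb{Z}_n$, position $(x,y)$ = row $x$, column $y$) with entry $i$ at each position of $\mathcal{A}_i$. Two $n\times n$ arrays over $n$-sets are orthogonal if all $n^2$ ordered pairs of corresponding entries are distinct. A diameter perfect Sudoku grid is a Latin square of order $n$ on $[n]$ orthogonal to $\mathcal{I}_{\mathcal{C},\mathcal{A}}$. Maps on arrays (indices mod $n$): $(r(A))_{i,j}=A_{n-1-j,i}$, $(s(A))_{i,j}=A_{i,n-1-j}$, $(\tau_1(A))_{i,j}=A_{i-1,j}$, $(\tau_2(A))_{i,j}=A_{i,j-1}$; the generated group acts by $\varphi\cdot A=\varphi(A)$. *)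

(* Defs.v *)
From mathcomp Require Import all_boot all_order all_fingroup all_algebra.
Set Implicit Arguments. Unset Strict Implicit. Unset Printing Implicit Defensive.
Import GRing.Theory.
Local Open Scope ring_scope.

Definition nt (t : nat) : nat := (2 * (t + 1) ^ 2)%N.

(* Points of Z_n^2 ; an array position (i,j) = row i, column j. *)
Definition point (n : nat) := ('Z_n * 'Z_n)%type.

Section Defs.
Variable n : nat.
Local Notation pt := (point n).

Definition padd (u v : pt) : pt := (u.1 + v.1, u.2 + v.2).
Definition psub (u v : pt) : pt := (u.1 - v.1, u.2 - v.2).
Definition pscale (k : 'Z_n) (u : pt) : pt := (k * u.1, k * u.2).

Definition leeZ (a : 'Z_n) : nat := minn (a : nat) (n - a).
Definition lee_wt (u : pt) : nat := (leeZ u.1 + leeZ u.2)%N.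
Definition lee_dist (u v : pt) : nat := lee_wt (psub u v).

Definition linear_code (C : {set pt}) : Prop :=
  [/\ (0%R, 0%R) \in C,
      (forall u v, u \in C -> v \in C -> padd u v \in C),
      (forall u, u \in C -> psub (0%R, 0%R) u \in C) &
      (forall k u, u \in C -> pscale k u \in C)].

(* Submodules spanned by one / two vectors (rows of a generator matrix). *)
Definition span1 (u : pt) : {set pt} := [set pscale k u | k : 'Z_n].
Definition span2 (u v : pt) : {set pt} :=
  [set padd (pscale k1 u) (pscale k2 v) | k1 : 'Z_n, k2 : 'Z_n].

(* Equivalence of codes via a 2x2 permutation matrix (identity or swap). *)
Definition swap_pt (u : pt) : pt := (u.2, u.1).
Definition code_equiv (C1 C2 : {set pt}) : Prop :=
  C2 = C1 \/ C2 = [set swap_pt u | u in C1].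

Definition anticode (t : nat) (c : pt) : {set pt} :=
  [set p | (lee_dist p c <= t)%N || (lee_dist p (padd c (1%R, 0%R)) <= t)%N].

Definition diam_perfect (t : nat) (C : {set pt}) : Prop :=
  [/\ (forall u v, u \in C -> v \in C -> u != v -> (2 * t + 2 <= lee_dist u v)%N),
      (exists u v, [/\ u \in C, v \in C, u != v & lee_dist u v = (2 * t + 2)%N]) &
      (#|C| * #|anticode t (0%R, 0%R)| = n ^ 2)%N].

(* Palette grid: entry at position p is (the label of) the codeword c whose
   associated anticode translate contains p; labels are the codewords. *)
Definition palette (t : nat) (C : {set pt}) (p : pt) : option pt :=
  [pick c in C | p \in anticode t c].

Definition arr := {ffun pt -> 'I_n}.

Definition latin (L : arr) : Prop :=
  (forall (i : 'Z_n) (k : 'I_n), exists! j : 'Z_n, L (i, j) = k) /\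
  (forall (j : 'Z_n) (k : 'I_n), exists! i : 'Z_n, L (i, j) = k).

Definition orthogonal (T1 T2 : Type) (A : pt -> T1) (B : pt -> T2) : Prop :=
  forall p q, (A p, B p) = (A q, B q) -> p = q.

Definition sudoku (t : nat) (C : {set pt}) (S : arr) : Prop :=
  latin S /\ orthogonal S (palette t C).

Definition reidx (f : pt -> pt) (A : arr) : arr := [ffun p => A (f p)].

Lemma reidx_inj (f g : pt -> pt) : cancel g f -> injective (reidx f).
Proof.
move=> gK A B /ffunP H; apply/ffunP => p.
by have := H (g p); rewrite !ffunE gK.
Qed.

Definition rpos (p : pt) : pt := (-1 - p.2, p.1).
Definition rpos_inv (p : pt) : pt := (p.2, -1 - p.1).
Definition spos (p : pt) : pt := (p.1, -1 - p.2).
Definition t1pos (p : pt) : pt := (p.1 - 1, p.2).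
Definition t1pos_inv (p : pt) : pt := (p.1 + 1, p.2).
Definition t2pos (p : pt) : pt := (p.1, p.2 - 1).
Definition t2pos_inv (p : pt) : pt := (p.1, p.2 + 1).

Lemma rpos_K : cancel rpos_inv rpos.
Proof. by case=> a b; rewrite /rpos /rpos_inv /= opprB addrC subrK. Qed.
Lemma spos_K : cancel spos spos.
Proof. by case=> a b; rewrite /spos /= opprB addrC subrK. Qed.
Lemma t1pos_K : cancel t1pos_inv t1pos.
Proof. by case=> a b; rewrite /t1pos /t1pos_inv /= addrK. Qed.
Lemma t2pos_K : cancel t2pos_inv t2pos.
Proof. by case=> a b; rewrite /t2pos /t2pos_inv /= addrK. Qed.

Definition r_map : {perm arr} := perm (reidx_inj rpos_K).
Definition s_map : {perm arr} := perm (reidx_inj spos_K).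
Definition tau1 : {perm arr} := perm (reidx_inj t1pos_K).
Definition tau2 : {perm arr} := perm (reidx_inj t2pos_K).

(* Functional composition: (after g h) A = g (h A).  (MathComp's perm product
   is left-to-right: (h * g) A = g (h A).) *)
Definition after (g h : {perm arr}) : {perm arr} := (h * g)%g.

End Defs.

Definition codeI (t : nat) : {set point (nt t)} :=
  span2 ((t + 1)%:R, (t + 1)%:R) (0%R, (2 * (t + 1))%:R).
Definition codeII (t : nat) : {set point (nt t)} :=
  span1 (1%R, (2 * t + 1)%:R).

Definition caseI (t : nat) (C0 : {set point (nt t)}) : Prop :=
  code_equiv C0 (codeI t).
Definition caseII (t : nat) (C0 : {set point (nt t)}) : Prop :=
  code_equiv C0 (codeII t).

Definition groupI (t : nat) (x : point (nt t)) : {set {perm arr (nt t)}} :=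
  <<[set after (tau1 _ ^+ (t + 1)) (tau2 _ ^+ (t + 1));
         tau2 _ ^+ (2 * (t + 1));
         after (tau2 _ ^+ (2 * x.2 + 1)) (s_map _);
         after (tau1 _ ^+ (2 * x.1 + 2))
               (after (tau2 _ ^+ (2 * x.2 + 1)) (r_map _ ^+ 2))]>>%g.

Definition groupII (t : nat) (a b : 'Z_(nt t)) (x : point (nt t))
  : {set {perm arr (nt t)}} :=
  <<[set after (tau1 _ ^+ a) (tau2 _ ^+ b);
         after (tau1 _ ^+ (2 * x.1 + 2))
               (after (tau2 _ ^+ (2 * x.2 + 1)) (r_map _ ^+ 2))]>>%g.

(* Main.v *)
Require Import Defs.
From mathcomp Require Import all_boot all_order all_fingroup all_algebra.
From mathcomp Require Import zify ring.
Set Implicit Arguments. Unset Strict Implicit. Unset Printing Implicit Defensive.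
Import GRing.Theory.
Local Open Scope ring_scope.

Section Lee.
Variable n : nat.
Hypothesis n1 : (1 < n)%N.

Lemma ltZ (a : 'Z_n) : (nat_of_ord a < n)%N.
Proof. by apply: (leq_trans (ltn_ord a)); rewrite Zp_cast. Qed.

Lemma valD (a b : 'Z_n) : nat_of_ord (a + b) = ((nat_of_ord a + nat_of_ord b) %% n)%N.
Proof. transitivity ((nat_of_ord a + nat_of_ord b) %% (Zp_trunc n).+2)%N => //.
by move: (_ + _)%N => m; rewrite (Zp_cast n1). Qed.

Lemma valN (a : 'Z_n) : nat_of_ord (- a) = ((n - nat_of_ord a) %% n)%N.
Proof. transitivity (((Zp_trunc n).+2 - nat_of_ord a) %% (Zp_trunc n).+2)%N => //.
by move: (nat_of_ord a) => m; rewrite (Zp_cast n1). Qed.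

Lemma leeZN (a : 'Z_n) : leeZ (- a) = leeZ a.
Proof.
rewrite /leeZ valN; have := ltZ a; case: (nat_of_ord a) => [|v] hv.
  by rewrite !subn0 modnn !min0n.
rewrite (@modn_small (n - v.+1) n); last lia.
lia.
Qed.

Lemma leeZD (a b : 'Z_n) : (leeZ (a + b)%R <= leeZ a + leeZ b)%N.
Proof.
rewrite /leeZ valD; have := ltZ a; have := ltZ b.
move: (nat_of_ord a) (nat_of_ord b) => u v hv hu.
case: (ltnP (u + v) n) => h.
  rewrite modn_small //; lia.
have -> : (u + v = (u + v - n) + n)%N by lia.
rewrite modnDr modn_small; lia.
Qed.

Lemma leeZ0 : leeZ (0 : 'Z_n) = 0%N.
Proof. by rewrite /leeZ /= min0n. Qed.

Lemma leeZ1 : (leeZ (1%R : 'Z_n) <= 1)%N.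
Proof. by rewrite /leeZ geq_minl. Qed.

Lemma leeZ_sgn (b : bool) (a : 'Z_n) : leeZ ((if b then -1 else 1) * a) = leeZ a.
Proof. by case: b; rewrite ?mulN1r ?mul1r ?leeZN. Qed.
End Lee.
Section P.
Variable n : nat.
Hypothesis n1 : (1 < n)%N.
Local Notation pt := (point n).
Definition e1 : pt := (1, 0).
Definition sgn (b : bool) : 'Z_n := if b then -1 else 1.
Definition fm (s1 s2 : bool) (k p : pt) : pt := (sgn s1 * p.1 + k.1, sgn s2 * p.2 + k.2).
Definition img (s1 s2 : bool) (k c : pt) : pt :=
  (sgn s1 * c.1 + k.1 - (if s1 then 1 else 0), sgn s2 * c.2 + k.2).

Lemma psub_fm s1 s2 k p q : psub (fm s1 s2 k p) (fm s1 s2 k q) = (sgn s1 * (p.1 - q.1), sgn s2 * (p.2 - q.2)).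
Proof. rewrite /psub /fm /=; congr (_, _); ring. Qed.

Lemma lee_fm s1 s2 k p q : lee_dist (fm s1 s2 k p) (fm s1 s2 k q) = lee_dist p q.
Proof. by rewrite /lee_dist psub_fm /lee_wt /= !(leeZ_sgn n1). Qed.

Lemma lee_sym (u v : pt) : lee_dist u v = lee_dist v u.
Proof.
rewrite /lee_dist /lee_wt /psub /= -(leeZN n1 (u.1 - v.1)) -(leeZN n1 (u.2 - v.2)) !opprB //.
Qed.

Lemma lee_tri (u v w : pt) : (lee_dist u w <= lee_dist u v + lee_dist v w)%N.
Proof.
rewrite /lee_dist /lee_wt /psub /=.
have -> : u.1 - w.1 = (u.1 - v.1) + (v.1 - w.1) by ring.
have -> : u.2 - w.2 = (u.2 - v.2) + (v.2 - w.2) by ring.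
have := leeZD n1 (u.1 - v.1) (v.1 - w.1).
have := leeZD n1 (u.2 - v.2) (v.2 - w.2).
lia.
Qed.

Lemma lee_tr (u v e : pt) : lee_dist (padd u e) (padd v e) = lee_dist u v.
Proof.
rewrite /lee_dist /psub /padd /=.
have -> : u.1 + e.1 - (v.1 + e.1) = u.1 - v.1 by ring.
by have -> : u.2 + e.2 - (v.2 + e.2) = u.2 - v.2 by ring.
Qed.

Lemma lee_e1 (u : pt) : (lee_dist u (padd u e1) <= 1)%N.
Proof.
rewrite /lee_dist /lee_wt /psub /padd /=.
have -> : u.1 - (u.1 + 1) = - 1 by ring.
have -> : u.2 - (u.2 + 0) = 0 by ring.
by rewrite (leeZN n1) leeZ0 addn0 leeZ1.
Qed.

Lemma fm_img t s1 s2 k c p :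
  p \in anticode t c -> fm s1 s2 k p \in anticode t (img s1 s2 k c).
Proof.
rewrite !inE.
case: s1.
  have -> : img true s2 k c = fm true s2 k (padd c e1).
    rewrite /img /fm /padd /sgn /=; congr (_, _); ring.
  have -> : padd (fm true s2 k (padd c e1)) (1, 0) = fm true s2 k c.
    rewrite /img /fm /padd /sgn /=; congr (_, _); ring.
  by rewrite !lee_fm orbC.
have -> : img false s2 k c = fm false s2 k c.
  rewrite /img /fm /padd /sgn /=; congr (_, _); ring.
have -> : padd (fm false s2 k c) (1, 0) = fm false s2 k (padd c e1).
  rewrite /img /fm /padd /sgn /=; congr (_, _); ring.
by rewrite !lee_fm.
Qed.

Lemma anti_close t (c d p : pt) : p \in anticode t c -> p \in anticode t d ->
  (lee_dist c d <= 2 * t + 1)%N.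
Proof.
rewrite !inE => /orP[h1|h1] /orP[h2|h2].
- have := lee_tri c p d; rewrite lee_sym in h1; lia.
- have := lee_tri c p (padd d e1); have := lee_tri c (padd d e1) d.
  have := lee_e1 d; rewrite (lee_sym (padd d e1)) (lee_sym c p) /e1; lia.
- have := lee_tri c (padd c e1) d; have := lee_tri (padd c e1) p d.
  have := lee_e1 c; rewrite (lee_sym (padd c e1) p) /e1; lia.
- rewrite -(lee_tr c d e1) /e1; have := lee_tri (padd c (1,0)) p (padd d (1, 0)).
  rewrite (lee_sym (padd c (1,0)) p); lia.
Qed.
End P.

Section Q.
Variable n : nat.
Hypothesis n1 : (1 < n)%N.
Local Notation pt := (point n).
Variable t : nat.
Variable C : {set pt}.
Hypothesis Disj : forall c d p, c \in C -> d \in C ->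
  p \in anticode t c -> p \in anticode t d -> c = d.

Lemma pal_some c p : c \in C -> p \in anticode t c -> palette t C p = Some c.
Proof.
move=> hc hp; rewrite /palette; case: pickP => [d /andP[hd hdp]|H].
  by congr Some; apply: Disj hd hc hdp hp.
by have := H c; rewrite hc hp.
Qed.

Lemma pal_P p c : palette t C p = Some c -> c \in C /\ p \in anticode t c.
Proof.
rewrite /palette; case: pickP => [d /andP[hd hdp]|//].
by case=> <-.
Qed.

Lemma pal_map (f g : pt -> pt) : cancel f g ->
  (forall c, c \in C -> exists2 c', c' \in C & forall p, p \in anticode t c -> f p \in anticode t c') ->
  (forall c, c \in C -> exists2 c', c' \in C & forall p, p \in anticode t c -> g p \in anticode t c') ->
  forall p q, palette t C p = palette t C q -> palette t C (f p) = palette t C (f q).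
Proof.
move=> fK Hf Hg.
have Hnone : forall p, palette t C p = None -> palette t C (f p) = None.
  move=> p hp; case E: (palette t C (f p)) => [d|] //.
  have [hd hfp] := pal_P E.
  have [d' hd' Hd'] := Hg d hd.
  have := Hd' _ hfp; rewrite fK => hpd.
  by rewrite (pal_some hd' hpd) in hp.
move=> p q; case E: (palette t C p) => [c|]; last first.
  by move=> /esym Eq; rewrite Hnone // Hnone.
move=> /esym Eq.
have [hc hp] := pal_P E; have [_ hq] := pal_P Eq.
have [c' hc' Hc'] := Hf c hc.
by rewrite (pal_some hc' (Hc' _ hp)) (pal_some hc' (Hc' _ hq)).
Qed.

Lemma sudoku_fm s1 s2 k k' (S : arr n) :
  cancel (fm s1 s2 k) (fm s1 s2 k') -> cancel (fm s1 s2 k') (fm s1 s2 k) ->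
  (forall c, c \in C -> img s1 s2 k c \in C) ->
  (forall c, c \in C -> img s1 s2 k' c \in C) ->
  sudoku t C S -> sudoku t C (reidx (fm s1 s2 k) S).
Proof.
move=> fK gK HCf HCg [[Lr Lc] Ho].
have E : forall p, reidx (fm s1 s2 k) S p = S (fm s1 s2 k p) by move=> p; rewrite ffunE.
split; first split.
- move=> i m; have [j0 [hj0 uj0]] := Lr (sgn n s1 * i + k.1) m.
  exists (sgn n s2 * j0 + k'.2); split.
    rewrite E /fm /=.
    have := gK (0, j0); rewrite /fm /= => [[_ ->]] //.
  move=> j; rewrite E /fm /= => /uj0 ->.
  by have := fK (i, j); rewrite /fm /= => [[_ ->]].
- move=> j m; have [i0 [hi0 ui0]] := Lc (sgn n s2 * j + k.2) m.
  exists (sgn n s1 * i0 + k'.1); split.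
    rewrite E /fm /=.
    have := gK (i0, 0); rewrite /fm /= => [[->]] //.
  move=> i; rewrite E /fm /= => /ui0 ->.
  by have := fK (i, j); rewrite /fm /= => [[->]].
move=> p q; rewrite !E => -[h1 h2].
have Hp := pal_map fK _ _ h2.
apply: (can_inj fK); apply: Ho; rewrite h1 Hp //.
- by move=> c hc; exists (img s1 s2 k c); [exact: HCf | move=> r; exact: fm_img].
- by move=> c hc; exists (img s1 s2 k' c); [exact: HCg | move=> r; exact: fm_img].
Qed.
End Q.

Definition kinv n (s1 s2 : bool) (k : point n) : point n :=
  (- (sgn n s1 * k.1), - (sgn n s2 * k.2)).

Lemma sgn2 n b : sgn n b * sgn n b = 1.
Proof. by case: b; rewrite /sgn ?mulrNN mulr1. Qed.

Lemma fm_cancel n s1 s2 (k : point n) : cancel (fm s1 s2 k) (fm s1 s2 (kinv s1 s2 k)).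
Proof.
case=> a b; rewrite /fm /kinv /=.
have h1 := sgn2 n s1; have h2 := sgn2 n s2.
congr (_, _).
  by rewrite mulrDr mulrA h1 mul1r addrK.
by rewrite mulrDr mulrA h2 mul1r addrK.
Qed.

Lemma kinvK n s1 s2 (k : point n) : kinv s1 s2 (kinv s1 s2 k) = k.
Proof.
case: k => a b; rewrite /kinv /= !mulrN !opprK !mulrA !sgn2 !mul1r //.
Qed.

Lemma sudoku_step n (n1 : (1 < n)%N) t (C : {set point n})
  (Disj : forall c d p, c \in C -> d \in C ->
    p \in anticode t c -> p \in anticode t d -> c = d)
  s1 s2 k (S : arr n) :
  (forall c, c \in C -> img s1 s2 k c \in C) ->
  (forall c, c \in C -> img s1 s2 (kinv s1 s2 k) c \in C) ->
  sudoku t C S -> sudoku t C (reidx (fm s1 s2 k) S).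
Proof.
move=> H1 H2; apply: sudoku_fm => //; [exact: fm_cancel| |exact: H2].
by rewrite -{2}(kinvK s1 s2 k); apply: fm_cancel.
Qed.

Lemma gen_closed (T : finType) (P : T -> Prop) (A : {set {perm T}}) :
  (forall h, h \in A -> forall S, P S -> P (h S)) ->
  forall g, g \in <<A>>%g -> forall S, P S -> P (g S).
Proof.
move=> H g /gen_prodgP [m [c Ac ->]].
elim: m c Ac => [|m IH] c Ac S PS; first by rewrite big_ord0 perm1.
rewrite big_ord_recr permM /=; apply: (H _ (Ac _)).
by apply: IH => // i.
Qed.

Section Pow.
Variable n : nat.
Lemma tau1_exp m (A : arr n) : (tau1 n ^+ m)%g A = reidx (fun p => (p.1 - m%:R, p.2)) A.
Proof.
elim: m A => [|m IH] A.
  by rewrite expg0 perm1; apply/ffunP => -[a b]; rewrite ffunE subr0.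
rewrite expgSr permM IH /tau1 permE; apply/ffunP => -[a b]; rewrite !ffunE /t1pos /=.
by congr (A (_, _)); rewrite mulrS; ring.
Qed.
Lemma tau2_exp m (A : arr n) : (tau2 n ^+ m)%g A = reidx (fun p => (p.1, p.2 - m%:R)) A.
Proof.
elim: m A => [|m IH] A.
  by rewrite expg0 perm1; apply/ffunP => -[a b]; rewrite ffunE subr0.
rewrite expgSr permM IH /tau2 permE; apply/ffunP => -[a b]; rewrite !ffunE /t2pos /=.
by congr (A (_, _)); rewrite mulrS; ring.
Qed.
Lemma r2_exp (A : arr n) : (r_map n ^+ 2)%g A = reidx (fun p => (-1 - p.1, -1 - p.2)) A.
Proof.
rewrite expgS expg1 permM /r_map !permE; apply/ffunP => -[a b]; rewrite !ffunE /rpos /=.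
by congr (A (_, _)); ring.
Qed.
Lemma s_eq (A : arr n) : s_map n A = reidx (spos (n:=n)) A.
Proof. by rewrite /s_map permE. Qed.
Lemma afterE (g h : {perm arr n}) A : after g h A = g (h A).
Proof. by rewrite /after permM. Qed.
End Pow.

Section Main.
Variable t : nat.
Local Notation n := (nt t).
Local Notation pt := (point n).
Definition uI : pt := ((t + 1)%:R, (t + 1)%:R).
Definition wI : pt := (0, (2 * (t + 1))%:R).

Lemma n1 : (1 < n)%N.
Proof. rewrite /nt; nia. Qed.

Lemma eW : ((2 * (t + 1))%:R : 'Z_n) = 2 * (t + 1)%:R.
Proof. by rewrite natrM. Qed.

Lemma inI k1 k2 (d : pt) : d = padd (pscale k1 uI) (pscale k2 wI) -> d \in codeI t.
Proof. by move=> ->; apply/imset2P; exists k1 k2. Qed.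

Lemma caseI_props (C0 : {set pt}) : caseI C0 ->
  [/\ uI \in C0, wI \in C0 & forall c, c \in C0 -> (c.1, - c.2) \in C0].
Proof.
case=> [E|E].
  rewrite -E; split.
  - by apply: (@inI 1 0); rewrite /padd /pscale /uI /wI /=; congr (_, _); ring.
  - by apply: (@inI 0 1); rewrite /padd /pscale /uI /wI /=; congr (_, _); ring.
  move=> c /imset2P[k1 k2 _ _ ->]; apply: (@inI k1 (- k1 - k2)).
  rewrite /padd /pscale /uI /wI /= eW; congr (_, _); ring.
have mC : forall c, (c \in C0) = (swap_pt c \in codeI t).
  by move=> c; rewrite E mem_imset //; case=> a b [] c' d'; rewrite /swap_pt /= => -[-> ->].
split.
- by rewrite mC; apply: (@inI 1 0); rewrite /padd /pscale /uI /wI /swap_pt /=; congr (_, _); ring.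
- rewrite mC; apply: (@inI 2 (-1)); rewrite /padd /pscale /uI /wI /swap_pt /= eW; congr (_, _); ring.
move=> c; rewrite !mC /swap_pt /= => /imset2P[k1 k2 _ _ Ec].
apply: (@inI (- k1) (k1 + k2)).
case: Ec; rewrite /padd /pscale /uI /wI /= eW => -> ->; congr (_, _); ring.
Qed.

Lemma lee_addl (x u v : pt) : lee_dist (padd x u) (padd x v) = lee_dist u v.
Proof.
rewrite /lee_dist /psub /padd /=.
have -> : x.1 + u.1 - (x.1 + v.1) = u.1 - v.1 by ring.
by have -> : x.2 + u.2 - (x.2 + v.2) = u.2 - v.2 by ring.
Qed.

Lemma eNat (z : 'Z_n) : ((z : nat)%:R : 'Z_n) = z.
Proof. exact: natr_Zp. Qed.

End Main.

Theorem mainTheorem4 (t : nat) (ht : (1 <= t)%N)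
  (C0 : {set point (nt t)}) (x : point (nt t)) :
  linear_code C0 -> diam_perfect t C0 ->
  let C := [set padd x c | c in C0] in
  caseI C0 \/ caseII C0 ->
  (caseI C0 ->
     forall (S : arr (nt t)) (g : {perm arr (nt t)}),
       sudoku t C S -> g \in groupI x -> sudoku t C (g S)) /\
  (forall a b : 'Z_(nt t),
     caseII C0 -> C0 = span1 (a, b) ->
     forall (S : arr (nt t)) (g : {perm arr (nt t)}),
       sudoku t C S -> g \in groupII a b x -> sudoku t C (g S)).
Proof.
move=> [H0 Hadd Hneg Hsc] [Hmin _ _] C _.
have N1 := n1 t.
have Disj : forall c d p, c \in C -> d \in C ->
    p \in anticode t c -> p \in anticode t d -> c = d.
  move=> c d p /imsetP[u hu ->] /imsetP[v hv ->] hc hd.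
  have := anti_close N1 hc hd.
  case: (eqVneq u v) => [->//|huv].
  have := Hmin u v hu hv huv; rewrite lee_addl; lia.
have step := sudoku_step N1 Disj.
have eB : (((2 * x.2 + 1)%N)%:R : 'Z_(nt t)) = 2 * x.2 + 1.
  by rewrite natrD natrM eNat.
have eA : (((2 * x.1 + 2)%N)%:R : 'Z_(nt t)) = 2 * x.1 + 2.
  by rewrite natrD natrM eNat.
have G4 : forall S, sudoku t C S -> sudoku t C
   (after (tau1 _ ^+ (2 * x.1 + 2)) (after (tau2 _ ^+ (2 * x.2 + 1)) (r_map _ ^+ 2)) S).
  move=> S hS.
  have -> : after (tau1 _ ^+ (2 * x.1 + 2)) (after (tau2 _ ^+ (2 * x.2 + 1)) (r_map _ ^+ 2)) S
     = reidx (fm true true ((2 * x.1 + 2)%:R - 1, (2 * x.2 + 1)%:R - 1)) S.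
    rewrite !afterE tau1_exp tau2_exp /r_map !permE; apply/ffunP => -[p1 p2].
    rewrite !ffunE /fm /sgn /rpos /=; congr (S (_, _)); ring.
  apply: step => //.
  + move=> c /imsetP[c0 hc0 ->]; apply/imsetP; exists (pscale (-1) c0); first exact: Hsc.
    rewrite /img /fm /sgn /padd /pscale /= eA eB; congr (_, _); ring.
  + move=> c /imsetP[c0 hc0 ->]; apply/imsetP; exists (pscale (-1) c0); first exact: Hsc.
    rewrite /img /kinv /fm /sgn /padd /pscale /= eA eB; congr (_, _); ring.
have Gtr : forall v, v \in C0 -> forall S, sudoku t C S ->
    sudoku t C (reidx (fm false false (pscale (-1) v)) S).
  move=> v hv S hS; apply: step => //.
  + move=> c /imsetP[c0 hc0 ->]; apply/imsetP; exists (padd c0 (pscale (-1) v)).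
      by apply: Hadd => //; apply: Hsc.
    rewrite /img /fm /sgn /padd /pscale /=; congr (_, _); ring.
  + move=> c /imsetP[c0 hc0 ->]; apply/imsetP; exists (padd c0 v).
      by apply: Hadd.
    rewrite /img /kinv /fm /sgn /padd /pscale /=; congr (_, _); ring.
split.
  move=> hI S g hS hg; have [hu hw hrefl] := caseI_props hI.
  apply: (gen_closed (P := sudoku t C)) hg S hS => h.
  rewrite !inE => /orP[/orP[/orP[/eqP->|/eqP->]|/eqP->]|/eqP->] S hS.
  - have -> : after (tau1 _ ^+ (t + 1)) (tau2 _ ^+ (t + 1)) S
       = reidx (fm false false (pscale (-1) (uI t))) S.
      rewrite !afterE tau1_exp tau2_exp; apply/ffunP => -[p1 p2].
      rewrite !ffunE /fm /sgn /pscale /uI /=; congr (S (_, _)); ring.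
    exact: Gtr.
  - have -> : (tau2 _ ^+ (2 * (t + 1)))%g S
       = reidx (fm false false (pscale (-1) (wI t))) S.
      rewrite tau2_exp; apply/ffunP => -[p1 p2].
      rewrite !ffunE /fm /sgn /pscale /wI /=; congr (S (_, _)); ring.
    exact: Gtr.
  - have -> : after (tau2 _ ^+ (2 * x.2 + 1)) (s_map _) S
       = reidx (fm false true (0, (2 * x.2 + 1)%:R - 1)) S.
      rewrite !afterE tau2_exp s_eq; apply/ffunP => -[p1 p2].
      rewrite !ffunE /fm /sgn /spos /=; congr (S (_, _)); ring.
    apply: step => //.
    + move=> c /imsetP[c0 hc0 ->]; apply/imsetP; exists (c0.1, - c0.2); first exact: hrefl.
      rewrite /img /fm /sgn /padd /pscale /= eB; congr (_, _); ring.
    + move=> c /imsetP[c0 hc0 ->]; apply/imsetP; exists (c0.1, - c0.2); first exact: hrefl.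
      rewrite /img /kinv /fm /sgn /padd /pscale /= eB; congr (_, _); ring.
  - exact: G4.
move=> a b _ EC0 S g hS hg.
have hab : (a, b) \in C0.
  rewrite EC0; apply/imsetP; exists 1 => //.
  by rewrite /pscale /= !mul1r.
apply: (gen_closed (P := sudoku t C)) hg S hS => h.
rewrite !inE => /orP[/eqP->|/eqP->] S hS; last exact: G4.
have -> : after (tau1 _ ^+ a) (tau2 _ ^+ b) S
     = reidx (fm false false (pscale (-1) (a, b))) S.
  rewrite !afterE tau1_exp tau2_exp !eNat; apply/ffunP => -[p1 p2].
  rewrite !ffunE /fm /sgn /pscale /=; congr (S (_, _)); ring.
exact: Gtr.
Qed.
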